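(* Let $\widehat\psi:\widehat S\to\mathbb Z$ be the homomorphism with $\widehat\psi(y_s)=1$, $\widehat\psi(x_s)=0$ for all $s\in\{0,1\}^{<\mathbb N}$ and $\widehat\psi(p_n)=0$ for all $n\ge0$. Then $S=\ker(\widehat\psi)$.
   Context: Let $\{0,1\}^{\mathbb N}$ be the Cantor set of infinite binary sequences and $\{0,1\}^{<\mathbb N}$ the set of finite binary words, including the empty word; juxtaposition denotes concatenation, $0^n,1^n$ denote constant words. Homeomorphisms act on the right. Define $x,y$ by $00\eta\cdot x=0\eta$, $01\eta\cdot x=10\eta$, $1\eta\cdot x=11\eta$, and recursively $00\eta\cdot y=0(\eta\cdot y)$, $01\eta\cdot y=10(\eta\cdot y^{-1})$, $1\eta\cdot y=11(\eta\cdot y)$; $x_s$ (resp. $y_s$) sends $s\eta\mapsto s(\eta\cdot x)$ (resp. $s(\eta\cdot y)$) and fixes sequences not beginning with $s$. For $n\ge0$ let $p_n$ be the homeomorphism with $1^k0\eta\cdot p_n=1^{k+1}0\eta$ for $0\le k\le n-1$, $1^n0\eta\cdot p_n=1^{n+1}\eta$, and $1^{n+1}\eta\cdot p_n=0\eta$. $F=\langle x_s\rangle$, $T=\langle F, p_n\ (n\ge0)\rangle$ (Thompson's group $T$), $\widehat S=\langle x_s,y_s,p_n\rangle$, and $S=\langle T,\ y_{10}y_{110}^{-1}\rangle$. (That such a homomorphism $\widehat\psi$ exists is part of the paper's results.) *)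

(* Defs.v *)
(* Cantor set {0,1}^N as nat -> bool (false = 0, true = 1);
   finite words as list bool. Homeomorphisms act on the right:
   eta . (g h) = (eta . g) . h, i.e. gmul g h = fun eta => h (g eta). *)
From Stdlib Require Import List ZArith Streams Bool.
Import ListNotations.

Definition Cantor := nat -> bool.

Definition ccons (b : bool) (e : Cantor) : Cantor :=
  fun n => match n with 0 => b | S m => e m end.

Definition cdrop (k : nat) (e : Cantor) : Cantor := fun n => e (k + n).

Fixpoint prepend (s : list bool) (e : Cantor) : Cantor :=
  match s with nil => e | b :: s' => ccons b (prepend s' e) end.

Fixpoint has_prefix (s : list bool) (e : Cantor) : bool :=
  match s with
  | nil => true
  | b :: s' => Bool.eqb (e 0) b && has_prefix s' (cdrop 1 e)
  end.

Definition at_word (s : list bool) (f : Cantor -> Cantor) : Cantor -> Cantor :=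
  fun e => if has_prefix s e then prepend s (f (cdrop (length s) e)) else e.

Definition gmul (g h : Cantor -> Cantor) : Cantor -> Cantor := fun e => h (g e).

(* x : 00eta -> 0eta, 01eta -> 10eta, 1eta -> 11eta *)
Definition x_map (e : Cantor) : Cantor :=
  if e 0 then ccons true (ccons true (cdrop 1 e))
  else if e 1 then ccons true (ccons false (cdrop 2 e))
  else ccons false (cdrop 2 e).

CoFixpoint y_str (s : Stream bool) : Stream bool :=
  match s with
  | Cons false (Cons false t) => Cons false (y_str t)
  | Cons false (Cons true t) => Cons true (Cons false (yinv_str t))
  | Cons true t => Cons true (Cons true (y_str t))
  end
with yinv_str (s : Stream bool) : Stream bool :=
  match s with
  | Cons false t => Cons false (Cons false (yinv_str t))
  | Cons true (Cons false t) => Cons false (Cons true (y_str t))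
  | Cons true (Cons true t) => Cons true (yinv_str t)
  end.

CoFixpoint to_stream (e : Cantor) : Stream bool := Cons (e 0) (to_stream (cdrop 1 e)).
Definition of_stream (s : Stream bool) : Cantor := fun n => Str_nth n s.

Definition y_map (e : Cantor) : Cantor := of_stream (y_str (to_stream e)).
Definition yinv_map (e : Cantor) : Cantor := of_stream (yinv_str (to_stream e)).

Definition x_s (s : list bool) : Cantor -> Cantor := at_word s x_map.
Definition y_s (s : list bool) : Cantor -> Cantor := at_word s y_map.
Definition yinv_s (s : list bool) : Cantor -> Cantor := at_word s yinv_map.

Definition p_map (n : nat) (e : Cantor) : Cantor :=
  if has_prefix (repeat true (S n)) e then ccons false (cdrop (S n) e)
  else if has_prefix (repeat true n ++ [false]) e
       then prepend (repeat true (S n)) (cdrop (S n) e)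
       else ccons true e.

Inductive generated (P : (Cantor -> Cantor) -> Prop) : (Cantor -> Cantor) -> Prop :=
| gen_base f : P f -> generated P f
| gen_id : generated P (fun e => e)
| gen_mul f g : generated P f -> generated P g -> generated P (gmul f g)
| gen_inv f g : generated P f -> (forall e, g (f e) = e) -> (forall e, f (g e) = e) ->
                generated P g.

Definition T_gens (f : Cantor -> Cantor) : Prop :=
  (exists s, f = x_s s) \/ (exists n, f = p_map n).

Definition Shat_gens (f : Cantor -> Cantor) : Prop :=
  (exists s, f = x_s s) \/ (exists s, f = y_s s) \/ (exists n, f = p_map n).

Definition S_gens (f : Cantor -> Cantor) : Prop :=
  T_gens f \/ f = gmul (y_s [true; false]) (yinv_s [true; true; false]).

Definition Tgrp := generated T_gens.
Definition Shat := generated Shat_gens.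
Definition Sgrp := generated S_gens.

(* Main.v *)
Require Import Defs.
From Stdlib Require Import List ZArith Lia FunctionalExtensionality Streams Bool.
Import ListNotations.

Lemma eta_cc (e : Cantor) : e = ccons (e 0%nat) (cdrop 1 e).
Proof. apply functional_extensionality; intros [|n]; reflexivity. Qed.

Lemma cantor_case (P : Cantor -> Prop) : (forall b z, P (ccons b z)) -> forall e, P e.
Proof. intros H e; rewrite (eta_cc e); apply H. Qed.

Lemma hp_prepend s z : has_prefix s (prepend s z) = true.
Proof. induction s as [|b s IH]; [reflexivity|]. simpl. destruct b; exact IH. Qed.

Lemma cdrop_prepend s z : cdrop (length s) (prepend s z) = z.
Proof. induction s as [|b s IH]; [reflexivity|]. exact IH. Qed.

Lemma prepend_cdrop s e : has_prefix s e = true -> prepend s (cdrop (length s) e) = e.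
Proof.
  revert e; induction s as [|b s IH]; intros e H; [reflexivity|].
  simpl in H. apply andb_true_iff in H as [H1 H2].
  simpl. change (cdrop (S (length s)) e) with (cdrop (length s) (cdrop 1 e)).
  rewrite IH by exact H2.
  apply functional_extensionality; intros [|n]; [|reflexivity].
  simpl. destruct (e 0%nat), b; simpl in H1; congruence.
Qed.

Lemma at_word_prepend s F z : at_word s F (prepend s z) = prepend s (F z).
Proof. unfold at_word. rewrite hp_prepend, cdrop_prepend. reflexivity. Qed.

Lemma at_word_cons b t f w : at_word (b::t) f (ccons b w) = ccons b (at_word t f w).
Proof.
  unfold at_word. cbn [has_prefix].
  change (cdrop 1 (ccons b w)) with w.
  replace (Bool.eqb (ccons b w 0%nat) b) with true by (destruct b; reflexivity).
  simpl. destruct (has_prefix t w); reflexivity.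
Qed.

Lemma at_word_cons_neq b c t f w : b <> c -> at_word (b::t) f (ccons c w) = ccons c w.
Proof.
  intros H. unfold at_word. cbn [has_prefix].
  replace (Bool.eqb (ccons c w 0%nat) b) with false by (destruct b, c; simpl; congruence).
  reflexivity.
Qed.

Lemma at_word_nil f e : at_word [] f e = f e.
Proof. reflexivity. Qed.

Lemma comm_01 a b F G e :
  at_word (false::a) F (at_word (true::b) G e) = at_word (true::b) G (at_word (false::a) F e).
Proof.
  revert e; apply cantor_case; intros [] z.
  - rewrite at_word_cons, at_word_cons_neq by discriminate.
    rewrite at_word_cons_neq by discriminate. rewrite at_word_cons. reflexivity.
  - rewrite at_word_cons_neq by discriminate. rewrite at_word_cons.
    rewrite at_word_cons_neq by discriminate. reflexivity.
Qed.

Lemma comm_lift c a b F G :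
  (forall e, at_word a F (at_word b G e) = at_word b G (at_word a F e)) ->
  forall e, at_word (c::a) F (at_word (c::b) G e) = at_word (c::b) G (at_word (c::a) F e).
Proof.
  intros H; apply cantor_case; intros b0 z.
  destruct (Bool.bool_dec b0 c) as [->|Hn].
  - rewrite !at_word_cons, H. reflexivity.
  - rewrite !at_word_cons_neq by congruence. reflexivity.
Qed.

Lemma at_word_inv s F G : (forall z, F (G z) = z) -> forall e, at_word s F (at_word s G e) = e.
Proof.
  intros H e. unfold at_word at 2. destruct (has_prefix s e) eqn:E.
  - rewrite at_word_prepend, H. apply prepend_cdrop; exact E.
  - unfold at_word; rewrite E; reflexivity.
Qed.

Lemma conj_gen_inv g ginv a a' :
  (forall e, ginv (g e) = e) -> (forall z, g (prepend a' z) = prepend a z) ->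
  forall F e, at_word a F (g e) = g (at_word a' F e).
Proof.
  intros Hinv Hmap F e. unfold at_word at 2. destruct (has_prefix a' e) eqn:E.
  - rewrite Hmap. rewrite <- (prepend_cdrop a' e E) at 1. rewrite Hmap.
    apply at_word_prepend.
  - unfold at_word. destruct (has_prefix a (g e)) eqn:E2; [|reflexivity].
    exfalso. apply prepend_cdrop in E2.
    set (z := cdrop (length a) (g e)) in *.
    assert (e = prepend a' z).
    { rewrite <- (Hinv e), <- E2, <- Hmap, Hinv. reflexivity. }
    rewrite H, hp_prepend in E. discriminate.
Qed.

Definition frob (s : Stream bool) := match s with Cons a t => Cons a t end.
Lemma frob_eq s : s = frob s. Proof. destruct s; reflexivity. Qed.

Lemma to_stream_ccons b e : to_stream (ccons b e) = Cons b (to_stream e).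
Proof. rewrite (frob_eq (to_stream (ccons b e))). reflexivity. Qed.

Lemma yff t : y_str (Cons false (Cons false t)) = Cons false (y_str t).
Proof. rewrite (frob_eq (y_str _)). reflexivity. Qed.
Lemma yft t : y_str (Cons false (Cons true t)) = Cons true (Cons false (yinv_str t)).
Proof. rewrite (frob_eq (y_str _)). reflexivity. Qed.
Lemma yt t : y_str (Cons true t) = Cons true (Cons true (y_str t)).
Proof. rewrite (frob_eq (y_str _)). reflexivity. Qed.
Lemma yif t : yinv_str (Cons false t) = Cons false (Cons false (yinv_str t)).
Proof. rewrite (frob_eq (yinv_str _)). reflexivity. Qed.
Lemma yitf t : yinv_str (Cons true (Cons false t)) = Cons false (Cons true (y_str t)).
Proof. rewrite (frob_eq (yinv_str _)). reflexivity. Qed.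
Lemma yitt t : yinv_str (Cons true (Cons true t)) = Cons true (yinv_str t).
Proof. rewrite (frob_eq (yinv_str _)). reflexivity. Qed.

Lemma of_stream_cons b s : of_stream (Cons b s) = ccons b (of_stream s).
Proof. apply functional_extensionality; intros [|n]; reflexivity. Qed.

Lemma ymap_ff z : y_map (ccons false (ccons false z)) = ccons false (y_map z).
Proof. unfold y_map. rewrite !to_stream_ccons, yff, of_stream_cons. reflexivity. Qed.
Lemma ymap_ft z : y_map (ccons false (ccons true z)) = ccons true (ccons false (yinv_map z)).
Proof. unfold y_map, yinv_map. rewrite !to_stream_ccons, yft, !of_stream_cons. reflexivity. Qed.
Lemma ymap_t z : y_map (ccons true z) = ccons true (ccons true (y_map z)).
Proof. unfold y_map. rewrite !to_stream_ccons, yt, !of_stream_cons. reflexivity. Qed.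
Lemma yimap_f z : yinv_map (ccons false z) = ccons false (ccons false (yinv_map z)).
Proof. unfold yinv_map. rewrite !to_stream_ccons, yif, !of_stream_cons. reflexivity. Qed.
Lemma yimap_tf z : yinv_map (ccons true (ccons false z)) = ccons false (ccons true (y_map z)).
Proof. unfold y_map, yinv_map. rewrite !to_stream_ccons, yitf, !of_stream_cons. reflexivity. Qed.
Lemma yimap_tt z : yinv_map (ccons true (ccons true z)) = ccons true (yinv_map z).
Proof. unfold yinv_map. rewrite !to_stream_ccons, yitt, !of_stream_cons. reflexivity. Qed.

Lemma y_inv_aux N : forall n, (n < N)%nat -> forall e,
  yinv_map (y_map e) n = e n /\ y_map (yinv_map e) n = e n.
Proof.
  induction N as [|N IH]; intros n Hn e; [lia|].
  split.
  - revert e; apply cantor_case; intros [] z.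
    + rewrite ymap_t, yimap_tt.
      destruct n as [|n]; [reflexivity|]. simpl. apply IH; lia.
    + revert z; apply cantor_case; intros [] w.
      * rewrite ymap_ft, yimap_tf. destruct n as [|[|n]]; try reflexivity.
        simpl. apply IH; lia.
      * rewrite ymap_ff, yimap_f. destruct n as [|[|n]]; try reflexivity.
        simpl. apply IH; lia.
  - revert e; apply cantor_case; intros [] z.
    + revert z; apply cantor_case; intros [] w.
      * rewrite yimap_tt, ymap_t. destruct n as [|[|n]]; try reflexivity.
        simpl. apply IH; lia.
      * rewrite yimap_tf, ymap_ft. destruct n as [|[|n]]; try reflexivity.
        simpl. apply IH; lia.
    + rewrite yimap_f, ymap_ff. destruct n as [|n]; [reflexivity|].
      simpl. apply IH; lia.
Qed.

Lemma yinv_y e : yinv_map (y_map e) = e.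
Proof. apply functional_extensionality; intros n. apply (y_inv_aux (S n)); lia. Qed.
Lemma y_yinv e : y_map (yinv_map e) = e.
Proof. apply functional_extensionality; intros n. apply (y_inv_aux (S n)); lia. Qed.

Definition xinv_map (e : Cantor) : Cantor :=
  if e 0%nat then (if e 1%nat then ccons true (cdrop 2 e) else ccons false (ccons true (cdrop 2 e)))
  else ccons false (ccons false (cdrop 1 e)).
Definition xinv_s s := at_word s xinv_map.

Lemma x_xinv e : x_map (xinv_map e) = e.
Proof.
  revert e; apply cantor_case; intros [] z; [revert z; apply cantor_case; intros [] w|]; reflexivity.
Qed.
Lemma xinv_x e : xinv_map (x_map e) = e.
Proof.
  revert e; apply cantor_case; intros [] z; [|revert z; apply cantor_case; intros [] w]; reflexivity.
Qed.
Lemma xs_xinvs s e : x_s s (xinv_s s e) = e.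
Proof. apply at_word_inv, x_xinv. Qed.
Lemma xinvs_xs s e : xinv_s s (x_s s e) = e.
Proof. apply at_word_inv, xinv_x. Qed.
Lemma ys_yinvs s e : y_s s (yinv_s s e) = e.
Proof. apply at_word_inv, y_yinv. Qed.
Lemma yinvs_ys s e : yinv_s s (y_s s e) = e.
Proof. apply at_word_inv, yinv_y. Qed.

Lemma F2root e :
  y_s [] e = y_s [true;true] (yinv_s [true;false] (y_s [false] (x_s [] e))).
Proof.
  revert e; apply cantor_case; intros [] z.
  - change (y_s [] (ccons true z)) with (y_map (ccons true z)). rewrite ymap_t.
    change (x_s [] (ccons true z)) with (ccons true (ccons true z)).
    unfold y_s, yinv_s.
    rewrite (at_word_cons_neq false true) by discriminate.
    rewrite at_word_cons, (at_word_cons_neq false true) by discriminate.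
    rewrite !at_word_cons. reflexivity.
  - revert z; apply cantor_case; intros [] w.
    + change (y_s [] (ccons false (ccons true w))) with (y_map (ccons false (ccons true w))).
      rewrite ymap_ft.
      change (x_s [] (ccons false (ccons true w))) with (ccons true (ccons false w)).
      unfold y_s, yinv_s.
      rewrite (at_word_cons_neq false true) by discriminate.
      rewrite !at_word_cons. rewrite (at_word_cons_neq true false) by discriminate.
      reflexivity.
    + change (y_s [] (ccons false (ccons false w))) with (y_map (ccons false (ccons false w))).
      rewrite ymap_ff.
      change (x_s [] (ccons false (ccons false w))) with (ccons false w).
      unfold y_s, yinv_s.
      rewrite at_word_cons.
      rewrite !(at_word_cons_neq true false) by discriminate. reflexivity.
Qed.

Lemma F2one e :
  y_s [true] e = y_s [true;true;true] (yinv_s [true;true;false] (y_s [true;false] (x_s [true] e))).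
Proof.
  revert e; apply cantor_case; intros [] z.
  - unfold y_s, yinv_s, x_s. rewrite !at_word_cons. f_equal. apply F2root.
  - unfold y_s, yinv_s, x_s. rewrite !(at_word_cons_neq true false) by discriminate. reflexivity.
Qed.

Definition R a b := gmul (y_s a) (yinv_s b).
Definition dd := gmul (y_s [true; false]) (yinv_s [true; true; false]).

Lemma Sgrp_ext f g : Sgrp f -> (forall e, f e = g e) -> Sgrp g.
Proof. intros H E. replace g with f; [exact H|]. apply functional_extensionality; exact E. Qed.

Lemma Sgrp_x s : Sgrp (x_s s).
Proof. apply gen_base. left. left. exists s. reflexivity. Qed.
Lemma Sgrp_xinv s : Sgrp (xinv_s s).
Proof. eapply gen_inv; [apply Sgrp_x| apply xinvs_xs | apply xs_xinvs]. Qed.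
Lemma Sgrp_p n : Sgrp (p_map n).
Proof. apply gen_base. left. right. exists n. reflexivity. Qed.
Lemma Sgrp_d : Sgrp dd.
Proof. apply gen_base. right. reflexivity. Qed.

Lemma Sgrp_comp f g : Sgrp f -> Sgrp g -> Sgrp (fun e => g (f e)).
Proof. intros; apply (gen_mul _ f g); assumption. Qed.

Lemma R_refl a : Sgrp (R a a).
Proof. apply (Sgrp_ext (fun e => e)); [apply gen_id|]. intros e; unfold R, gmul. symmetry; apply yinvs_ys. Qed.

Lemma R_inv a b : Sgrp (R a b) -> Sgrp (R b a).
Proof.
  intros H. eapply gen_inv; [exact H| |]; intros e; unfold R, gmul.
  - rewrite ys_yinvs. apply yinvs_ys.
  - rewrite ys_yinvs. apply yinvs_ys.
Qed.

Lemma R_trans a b c : Sgrp (R a b) -> Sgrp (R b c) -> Sgrp (R a c).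
Proof.
  intros H1 H2. apply (Sgrp_ext (gmul (R a b) (R b c))); [apply gen_mul; assumption|].
  intros e; unfold R, gmul. rewrite ys_yinvs. reflexivity.
Qed.

Lemma transportR g ginv a a' b b' :
  (forall e, ginv (g e) = e) -> Sgrp g -> Sgrp ginv ->
  (forall F e, at_word a F (g e) = g (at_word a' F e)) ->
  (forall F e, at_word b F (g e) = g (at_word b' F e)) ->
  Sgrp (R a b) -> Sgrp (R a' b').
Proof.
  intros Hgi Sg Sgi Ha Hb H.
  apply (Sgrp_ext (fun e => ginv (R a b (g e)))).
  - apply Sgrp_comp; [apply Sgrp_comp|]; assumption.
  - intros e. unfold R, gmul, y_s, yinv_s. rewrite Ha, Hb, Hgi. reflexivity.
Qed.

Definition p2 := p_map 2.
Lemma p2_0 z : p2 (prepend [false] z) = prepend [true;false] z. Proof. reflexivity. Qed.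
Lemma p2_10 z : p2 (prepend [true;false] z) = prepend [true;true;false] z. Proof. reflexivity. Qed.
Lemma p2_110 z : p2 (prepend [true;true;false] z) = prepend [true;true;true] z. Proof. reflexivity. Qed.
Lemma p2_111 z : p2 (prepend [true;true;true] z) = prepend [false] z. Proof. reflexivity. Qed.

Lemma p2_4 e : p2 (p2 (p2 (p2 e))) = e.
Proof.
  revert e; apply cantor_case; intros [] z.
  - revert z; apply cantor_case; intros [] w.
    + revert w; apply cantor_case; intros [] v.
      * exact (f_equal p2 (f_equal p2 (f_equal p2 (p2_111 v))) ).
      * exact (f_equal p2 (f_equal p2 (f_equal p2 (p2_110 v))) ).
    + exact (f_equal p2 (f_equal p2 (f_equal p2 (p2_10 w))) ).
  - exact (f_equal p2 (f_equal p2 (f_equal p2 (p2_0 z))) ).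
Qed.

Lemma Sgrp_p2 : Sgrp p2. Proof. apply Sgrp_p. Qed.
Lemma Sgrp_p22 : Sgrp (fun e => p2 (p2 e)). Proof. apply Sgrp_comp; apply Sgrp_p. Qed.
Lemma Sgrp_p23 : Sgrp (fun e => p2 (p2 (p2 e))).
Proof. apply Sgrp_comp; [apply Sgrp_p22|apply Sgrp_p]. Qed.

Lemma R_0_10 : Sgrp (R [false] [true;false]).
Proof.
  apply (transportR p2 (fun e => p2 (p2 (p2 e))) [true;false] [false] [true;true;false] [true;false]).
  - apply p2_4.
  - apply Sgrp_p2.
  - apply Sgrp_p23.
  - apply conj_gen_inv with (ginv := fun e => p2 (p2 (p2 e))); [apply p2_4|apply p2_0].
  - apply conj_gen_inv with (ginv := fun e => p2 (p2 (p2 e))); [apply p2_4|apply p2_10].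
  - apply Sgrp_d.
Qed.

Lemma R_110_111 : Sgrp (R [true;true;false] [true;true;true]).
Proof.
  apply (transportR (fun e => p2 (p2 (p2 e))) p2 [true;false] [true;true;false] [true;true;false] [true;true;true]).
  - intros e. apply p2_4.
  - apply Sgrp_p23.
  - apply Sgrp_p2.
  - apply (conj_gen_inv (fun e => p2 (p2 (p2 e))) p2); [intros e; apply p2_4|reflexivity].
  - apply (conj_gen_inv (fun e => p2 (p2 (p2 e))) p2); [intros e; apply p2_4|reflexivity].
  - apply Sgrp_d.
Qed.

Lemma R_111_0 : Sgrp (R [true;true;true] [false]).
Proof.
  apply (transportR (fun e => p2 (p2 e)) (fun e => p2 (p2 e)) [true;false] [true;true;true] [true;true;false] [false]).
  - intros e. apply p2_4.
  - apply Sgrp_p22.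
  - apply Sgrp_p22.
  - apply (conj_gen_inv (fun e => p2 (p2 e)) (fun e => p2 (p2 e))); [intros e; apply p2_4|reflexivity].
  - apply (conj_gen_inv (fun e => p2 (p2 e)) (fun e => p2 (p2 e))); [intros e; apply p2_4|reflexivity].
  - apply Sgrp_d.
Qed.

Definition C u := Sgrp (R (true::u) [false]).

Lemma move_x s0 a a' : (forall z, x_s (true::s0) (prepend a' z) = prepend a z) ->
  Sgrp (R a [false]) -> Sgrp (R a' [false]).
Proof.
  intros Hm. apply (transportR (x_s (true::s0)) (xinv_s (true::s0))).
  - apply xinvs_xs.
  - apply Sgrp_x.
  - apply Sgrp_xinv.
  - apply (conj_gen_inv (x_s (true::s0)) (xinv_s (true::s0))); [apply xinvs_xs|exact Hm].
  - intros F e. apply (comm_01 [] s0 F x_map).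
Qed.

Lemma move_xi s0 a a' : (forall z, xinv_s (true::s0) (prepend a' z) = prepend a z) ->
  Sgrp (R a [false]) -> Sgrp (R a' [false]).
Proof.
  intros Hm. apply (transportR (xinv_s (true::s0)) (x_s (true::s0))).
  - apply xs_xinvs.
  - apply Sgrp_xinv.
  - apply Sgrp_x.
  - apply (conj_gen_inv (xinv_s (true::s0)) (x_s (true::s0))); [apply xs_xinvs|exact Hm].
  - intros F e. apply (comm_01 [] s0 F xinv_map).
Qed.

Lemma C0 : C [false].
Proof. apply R_inv, R_0_10. Qed.
Lemma C11 : C [true;true].
Proof. exact R_111_0. Qed.
Lemma C10 : C [true;false].
Proof. eapply R_trans; [apply R_110_111|apply R_111_0]. Qed.
Lemma C1 : C [true].
Proof. apply (move_x [] [true;true;true] [true;true]); [reflexivity|apply C11]. Qed.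

Lemma core n : forall u, length u <= n -> u <> [] -> C u.
Proof.
  induction n as [|n IH]; intros u Hl Hne.
  { destruct u; [congruence|simpl in Hl; lia]. }
  assert (aux : forall w, length (true::false::w) <= S n -> C (true::false::w)).
  { intros [|[] w'] Hw.
    - apply C10.
    - apply (move_x [true] (true::true::true::false::w') (true::true::false::true::w')); [reflexivity|].
      apply (move_xi [] (true::true::false::w') (true::true::true::false::w')); [reflexivity|].
      apply IH; [simpl in *; lia|discriminate].
    - apply (move_x [true] (true::true::false::w') (true::true::false::false::w')); [reflexivity|].
      apply IH; [simpl in *; lia|discriminate]. }
  destruct u as [|[] [|[] w]]; try congruence.
  - apply C1.
  - apply (move_xi [] (true::true::w) (true::true::true::w)); [reflexivity|].
    apply IH; [simpl in *; lia|discriminate].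
  - apply aux; exact Hl.
  - apply C0.
  - apply (move_x [] (true::true::false::w) (true::false::true::w)); [reflexivity|].
    apply aux; simpl in *; lia.
  - apply (move_x [] (true::false::w) (true::false::false::w)); [reflexivity|].
    apply IH; [simpl in *; lia|discriminate].
Qed.

Lemma Call u : u <> [] -> C u.
Proof. intros; apply (core (length u)); auto. Qed.

Lemma R_1_0 : Sgrp (R [true] [false]).
Proof.
  apply (Sgrp_ext (fun e => R [true;true;true] [false] (dd (x_s [true] e)))).
  - apply Sgrp_comp; [apply Sgrp_comp|]; [apply Sgrp_x|apply Sgrp_d|apply C11].
  - intros e. unfold R, dd, gmul. rewrite F2one. reflexivity.
Qed.

Lemma p0_inv e : p_map 0 (p_map 0 e) = e.
Proof. revert e; apply cantor_case; intros [] z; reflexivity. Qed.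

Lemma Z0 s : Sgrp (R s [false]).
Proof.
  destruct s as [|[] w].
  - apply (Sgrp_ext (fun e => R [true;true] [false] (R [false] [true;false] (x_s [] e)))).
    + apply Sgrp_comp; [apply Sgrp_comp|]; [apply Sgrp_x|apply R_0_10|apply (Call [true]); discriminate].
    + intros e. unfold R, gmul. rewrite F2root. reflexivity.
  - destruct w as [|b w]; [apply R_1_0|apply Call; discriminate].
  - destruct w as [|b w]; [apply R_refl|].
    apply (R_trans _ [true]); [|apply R_1_0].
    apply (transportR (p_map 0) (p_map 0) (true::b::w) (false::b::w) [false] [true]).
    + apply p0_inv.
    + apply Sgrp_p.
    + apply Sgrp_p.
    + apply (conj_gen_inv (p_map 0) (p_map 0)); [apply p0_inv|reflexivity].
    + apply (conj_gen_inv (p_map 0) (p_map 0)); [apply p0_inv|reflexivity].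
    + apply Call; discriminate.
Qed.

Lemma Main s : Sgrp (R s [true;false]).
Proof. apply (R_trans _ [false]); [apply Z0|apply R_0_10]. Qed.

Definition c10 := y_s [true;false].
Definition ci10 := yinv_s [true;false].
Definition conjc (h : Cantor -> Cantor) := fun e => ci10 (h (c10 e)).
Definition conjci (h : Cantor -> Cantor) := fun e => c10 (h (ci10 e)).

Lemma pS_0 m z : p_map (S m) (ccons false z) = ccons true (ccons false z).
Proof. reflexivity. Qed.

Lemma pS_conj m F e : at_word [true;false] F (p_map (S m) e) = p_map (S m) (at_word [false] F e).
Proof.
  revert e; apply cantor_case; intros [] z; cbv beta.
  - rewrite (at_word_cons_neq false true) by discriminate.
    unfold p_map.
    repeat match goal with |- context [if ?b then _ else _] => destruct b end;
    cbn [prepend repeat];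
    first [apply at_word_cons_neq; discriminate
          | rewrite at_word_cons, (at_word_cons_neq false true) by discriminate; reflexivity].
  - rewrite pS_0, !at_word_cons, pS_0. reflexivity.
Qed.

Lemma Rinv' a : Sgrp (R [true;false] a).
Proof. apply R_inv, Main. Qed.

Lemma gen_conj g : S_gens g -> Sgrp (conjc g) /\ Sgrp (conjci g).
Proof.
  intros [[[s ->]|[n ->]]| ->].
  - destruct s as [|[] u].
    + assert (Hc : forall F e, at_word [true;false] F (x_s [] e) = x_s [] (at_word [false;true] F e)).
      { apply (conj_gen_inv (x_s []) (xinv_s [])); [apply xinvs_xs|reflexivity]. }
      split.
      * apply (Sgrp_ext (fun e => x_s [] (R [true;false] [false;true] e))).
        { apply Sgrp_comp; [apply Rinv'|apply Sgrp_x]. }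
        intros e; unfold conjc, ci10, c10, R, gmul, yinv_s. rewrite Hc. reflexivity.
      * apply (Sgrp_ext (fun e => x_s [] (R [false;true] [true;false] e))).
        { apply Sgrp_comp; [apply Main|apply Sgrp_x]. }
        intros e; unfold conjci, ci10, c10, R, gmul, yinv_s, y_s. rewrite Hc.
        f_equal. symmetry. apply (comm_01 [true] [false]).
    + assert (Hy : forall e, x_s (true::u) (y_s [false] e) = y_s [false] (x_s (true::u) e)).
      { intros e. symmetry. apply (comm_01 [] u). }
      assert (Hyi : forall e, x_s (true::u) (yinv_s [false] e) = yinv_s [false] (x_s (true::u) e)).
      { intros e. symmetry. apply (comm_01 [] u). }
      split.
      * apply (Sgrp_ext (fun e => R [false] [true;false] (x_s (true::u) (R [true;false] [false] e)))).
        { apply Sgrp_comp; [apply Sgrp_comp|]; [apply Rinv'|apply Sgrp_x|apply Main]. }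
        intros e; unfold conjc, ci10, c10, R, gmul. rewrite <- Hy, ys_yinvs. reflexivity.
      * apply (Sgrp_ext (fun e => R [true;false] [false] (x_s (true::u) (R [false] [true;false] e)))).
        { apply Sgrp_comp; [apply Sgrp_comp|]; [apply Main|apply Sgrp_x|apply Rinv']. }
        intros e; unfold conjci, ci10, c10, R, gmul.
        assert (C1 : forall e, yinv_s [true;false] (y_s [false] e) = y_s [false] (yinv_s [true;false] e)).
        { intros e'. symmetry. exact (comm_01 [] [false] y_map yinv_map e'). }
        assert (C2 : forall e, y_s [true;false] (y_s [false] e) = y_s [false] (y_s [true;false] e)).
        { intros e'. symmetry. exact (comm_01 [] [false] y_map y_map e'). }
        rewrite C1, Hy, C2. apply yinvs_ys.
    + assert (Hy : forall e, x_s (false::u) (c10 e) = c10 (x_s (false::u) e)).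
      { intros e. apply (comm_01 u [false]). }
      assert (Hyi : forall e, x_s (false::u) (ci10 e) = ci10 (x_s (false::u) e)).
      { intros e. apply (comm_01 u [false]). }
      split.
      * apply (Sgrp_ext (x_s (false::u))); [apply Sgrp_x|].
        intros e; unfold conjc. rewrite Hy. symmetry; apply yinvs_ys.
      * apply (Sgrp_ext (x_s (false::u))); [apply Sgrp_x|].
        intros e; unfold conjci. rewrite Hyi. symmetry; apply ys_yinvs.
  - destruct n as [|m].
    + assert (Hc : forall F e, at_word [true;false] F (p_map 0 e) = p_map 0 (at_word [false;false] F e)).
      { apply (conj_gen_inv (p_map 0) (p_map 0)); [apply p0_inv|reflexivity]. }
      split.
      * apply (Sgrp_ext (fun e => p_map 0 (R [true;false] [false;false] e))).
        { apply Sgrp_comp; [apply Rinv'|apply Sgrp_p]. }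
        intros e; unfold conjc, ci10, c10, R, gmul, yinv_s. rewrite Hc. reflexivity.
      * apply (Sgrp_ext (fun e => p_map 0 (R [false;false] [true;false] e))).
        { apply Sgrp_comp; [apply Main|apply Sgrp_p]. }
        intros e; unfold conjci, ci10, c10, R, gmul, yinv_s, y_s. rewrite Hc.
        f_equal. symmetry. apply (comm_01 [false] [false]).
    + split.
      * apply (Sgrp_ext (fun e => p_map (S m) (R [true;false] [false] e))).
        { apply Sgrp_comp; [apply Rinv'|apply Sgrp_p]. }
        intros e; unfold conjc, ci10, c10, R, gmul, yinv_s. rewrite pS_conj. reflexivity.
      * apply (Sgrp_ext (fun e => p_map (S m) (R [false] [true;false] e))).
        { apply Sgrp_comp; [apply Main|apply Sgrp_p]. }
        intros e; unfold conjci, ci10, c10, R, gmul, yinv_s, y_s. rewrite pS_conj.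
        f_equal. symmetry. apply (comm_01 [] [false]).
  - assert (H1 : forall F G e, at_word [true;false] F (at_word [true;true;false] G e)
                    = at_word [true;true;false] G (at_word [true;false] F e)).
    { intros F G. apply comm_lift. intros e. apply (comm_01 [] [false]). }
    split.
    + apply (Sgrp_ext dd); [apply Sgrp_d|].
      intros e; unfold conjc, ci10, c10, dd, gmul, yinv_s, y_s.
      rewrite H1. f_equal. symmetry. apply yinvs_ys.
    + apply (Sgrp_ext dd); [apply Sgrp_d|].
      intros e; unfold conjci, ci10, c10, dd, gmul, yinv_s, y_s.
      rewrite (at_word_inv [true;false] y_map yinv_map y_yinv e). symmetry. apply H1.
Qed.

Lemma NC h : Sgrp h -> Sgrp (conjc h) /\ Sgrp (conjci h).
Proof.
  induction 1 as [f Hf| |f g Hf [IHf1 IHf2] Hg [IHg1 IHg2]|f g Hf [IH1 IH2] Hgf Hfg].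
  - apply gen_conj; exact Hf.
  - split; (apply (Sgrp_ext (fun e => e)); [apply gen_id|]); intros e; unfold conjc, conjci, c10, ci10.
    + symmetry; apply yinvs_ys.
    + symmetry; apply ys_yinvs.
  - split.
    + apply (Sgrp_ext (gmul (conjc f) (conjc g))); [apply gen_mul; assumption|].
      intros e; unfold conjc, gmul, c10, ci10. rewrite ys_yinvs. reflexivity.
    + apply (Sgrp_ext (gmul (conjci f) (conjci g))); [apply gen_mul; assumption|].
      intros e; unfold conjci, gmul, c10, ci10. rewrite yinvs_ys. reflexivity.
  - split.
    + apply (gen_inv _ (conjc f)); [assumption| |]; intros e; unfold conjc, c10, ci10.
      * rewrite ys_yinvs, Hgf. apply yinvs_ys.
      * rewrite ys_yinvs, Hfg. apply yinvs_ys.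
    + apply (gen_inv _ (conjci f)); [assumption| |]; intros e; unfold conjci, c10, ci10.
      * rewrite yinvs_ys, Hgf. apply ys_yinvs.
      * rewrite yinvs_ys, Hfg. apply ys_yinvs.
Qed.

Definition cpow (k : Z) (e : Cantor) : Cantor :=
  if (0 <=? k)%Z then Nat.iter (Z.to_nat k) c10 e else Nat.iter (Z.to_nat (- k)) ci10 e.

Lemma cpow_succ k e : cpow (Z.succ k) e = c10 (cpow k e).
Proof.
  unfold cpow. destruct (Z.leb_spec 0 k).
  - replace (0 <=? Z.succ k)%Z with true by (symmetry; apply Z.leb_le; lia).
    rewrite Z2Nat.inj_succ by lia. reflexivity.
  - destruct (Z.leb_spec 0 (Z.succ k)).
    + assert (k = -1)%Z by lia. subst. simpl. symmetry; apply ys_yinvs.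
    + replace (Z.to_nat (- k)) with (S (Z.to_nat (- Z.succ k))) by lia.
      simpl. symmetry; apply ys_yinvs.
Qed.

Lemma cpow_pred k e : cpow (Z.pred k) e = ci10 (cpow k e).
Proof.
  unfold cpow. destruct (Z.leb_spec 0 (Z.pred k)).
  - replace (0 <=? k)%Z with true by (symmetry; apply Z.leb_le; lia).
    replace (Z.to_nat k) with (S (Z.to_nat (Z.pred k))) by lia.
    simpl. symmetry; apply yinvs_ys.
  - destruct (Z.leb_spec 0 k).
    + assert (k = 0)%Z by lia. subst. reflexivity.
    + replace (Z.to_nat (- Z.pred k)) with (S (Z.to_nat (- k))) by lia. reflexivity.
Qed.

Lemma cpow_0 e : cpow 0 e = e. Proof. reflexivity. Qed.

Lemma cpow_add a : forall b e, cpow a (cpow b e) = cpow (a + b) e.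
Proof.
  induction a using Z.peano_ind; intros b e.
  - reflexivity.
  - rewrite cpow_succ, IHa, Z.add_succ_l, cpow_succ. reflexivity.
  - rewrite cpow_pred, IHa, Z.add_pred_l, cpow_pred. reflexivity.
Qed.

Lemma conjpow k : forall h, Sgrp h -> Sgrp (fun e => cpow (- k) (h (cpow k e))).
Proof.
  induction k using Z.peano_ind; intros h Hh.
  - exact Hh.
  - apply (Sgrp_ext _ _ (IHk _ (proj1 (NC h Hh)))).
    intros e. unfold conjc. change (c10 (cpow k e)) with (cpow 1 (cpow k e)).
    change (ci10 (h (cpow 1 (cpow k e)))) with (cpow (-1) (h (cpow 1 (cpow k e)))).
    rewrite !cpow_add. f_equal; [lia|]. f_equal. f_equal. lia.
  - apply (Sgrp_ext _ _ (IHk _ (proj2 (NC h Hh)))).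
    intros e. unfold conjci. change (ci10 (cpow k e)) with (cpow (-1) (cpow k e)).
    change (c10 (h (cpow (-1) (cpow k e)))) with (cpow 1 (h (cpow (-1) (cpow k e)))).
    rewrite !cpow_add. f_equal; [lia|]. f_equal. f_equal. lia.
Qed.

Lemma coset f : Shat f -> exists h k, Sgrp h /\ forall e, f e = cpow k (h e).
Proof.
  induction 1 as [f Hf| |f g Hf [h1 [k1 [S1 E1]]] Hg [h2 [k2 [S2 E2]]]|f g Hf [h [k [Sh E]]] Hgf Hfg].
  - destruct Hf as [[s ->]|[[s ->]|[n ->]]].
    + exists (x_s s), 0%Z. split; [apply Sgrp_x|reflexivity].
    + exists (R s [true;false]), 1%Z. split; [apply Main|].
      intros e. unfold R, gmul. change (cpow 1 ?x) with (c10 x). symmetry; apply ys_yinvs.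
    + exists (p_map n), 0%Z. split; [apply Sgrp_p|reflexivity].
  - exists (fun e => e), 0%Z. split; [apply gen_id|reflexivity].
  - exists (fun e => cpow (- k1) (h2 (cpow k1 (h1 e)))), (k1 + k2)%Z. split.
    + apply (Sgrp_comp h1 (fun e => cpow (- k1) (h2 (cpow k1 e)))); [exact S1|apply conjpow; exact S2].
    + intros e. unfold gmul. rewrite E1, E2, cpow_add. f_equal. lia.
  - assert (Eh : forall x, h x = cpow (- k) (f x)).
    { intros x. rewrite E, cpow_add. replace (- k + k)%Z with 0%Z by lia. reflexivity. }
    assert (Si : Sgrp (fun e => g (cpow k e))).
    { apply (gen_inv _ h); [exact Sh| |]; intros e.
      - rewrite <- E. apply Hgf.
      - rewrite Eh, Hfg, cpow_add. replace (- k + k)%Z with 0%Z by lia. reflexivity. }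
    exists (fun e => cpow (- - k) (g (cpow k (cpow (- k) e)))), (- k)%Z. split.
    + exact (conjpow (- k) _ Si).
    + intros e. rewrite !cpow_add. replace (k + - k)%Z with 0%Z by lia.
      replace (- k + - - k)%Z with 0%Z by lia. reflexivity.
Qed.
Open Scope Z_scope.

Theorem proposition6p9 (psi : (Cantor -> Cantor) -> Z)
  (psi_hom : forall f g, Shat f -> Shat g -> psi (gmul f g) = psi f + psi g)
  (psi_y : forall s, psi (y_s s) = 1)
  (psi_x : forall s, psi (x_s s) = 0)
  (psi_p : forall n, psi (p_map n) = 0) :
  forall f, Sgrp f <-> (Shat f /\ psi f = 0).
Proof.
  assert (Hid : psi (fun e => e) = 0).
  { pose proof (psi_hom (fun e => e) (fun e => e) (gen_id _) (gen_id _)) as H.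
    change (gmul (fun e : Cantor => e) (fun e => e)) with (fun e : Cantor => e) in H. lia. }
  assert (Hinvp : forall f g, Shat f -> (forall e, g (f e) = e) -> (forall e, f (g e) = e) ->
            Shat g /\ psi g = - psi f).
  { intros f g Hf H1 H2. assert (Sg : Shat g) by (apply (gen_inv _ f); assumption).
    split; [exact Sg|].
    pose proof (psi_hom f g Hf Sg) as H.
    replace (gmul f g) with (fun e : Cantor => e) in H
      by (apply functional_extensionality; intros e; symmetry; apply H1). lia. }
  assert (Shy : forall s, Shat (y_s s)) by (intros s; apply gen_base; right; left; exists s; reflexivity).
  assert (Shyi : forall s, Shat (yinv_s s) /\ psi (yinv_s s) = -1).
  { intros s. destruct (Hinvp (y_s s) (yinv_s s) (Shy s)) as [A B];
      [apply yinvs_ys|apply ys_yinvs|]. rewrite psi_y in B. split; assumption. }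
  assert (fwd : forall f, Sgrp f -> Shat f /\ psi f = 0).
  { induction 1 as [f Hf| |f g Hf [Sf Pf] Hg [Sg Pg]|f g Hf [Sf Pf] H1 H2].
    - destruct Hf as [[[s ->]|[n ->]]| ->].
      + split; [apply gen_base; left; exists s; reflexivity|apply psi_x].
      + split; [apply gen_base; right; right; exists n; reflexivity|apply psi_p].
      + destruct (Shyi [true;true;false]) as [A B].
        unfold dd; split; [apply gen_mul; [apply Shy|exact A]|]. rewrite (psi_hom _ _ (Shy _) A). rewrite psi_y, B. lia.
    - split; [apply gen_id|exact Hid].
    - split; [apply gen_mul; assumption|]. rewrite psi_hom by assumption. lia.
    - destruct (Hinvp f g Sf H1 H2) as [A B]. split; [exact A|lia]. }
  assert (Hpow : forall k, Shat (cpow k) /\ psi (cpow k) = k).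
  { induction k using Z.peano_ind.
    - change (cpow 0) with (fun e : Cantor => cpow 0 e). split; [apply gen_id|exact Hid].
    - destruct IHk as [A B].
      replace (cpow (Z.succ k)) with (gmul (cpow k) (y_s [true;false]))
        by (apply functional_extensionality; intros e; rewrite cpow_succ; reflexivity).
      split; [apply gen_mul; [exact A|apply Shy]|]. rewrite (psi_hom _ _ A (Shy _)). rewrite psi_y. lia.
    - destruct IHk as [A B]. destruct (Shyi [true;false]) as [C D].
      replace (cpow (Z.pred k)) with (gmul (cpow k) (yinv_s [true;false]))
        by (apply functional_extensionality; intros e; rewrite cpow_pred; reflexivity).
      split; [apply gen_mul; [exact A|exact C]|]. rewrite (psi_hom _ _ A C). lia. }
  intros f; split; [apply fwd|].
  intros [Sf Pf]. destruct (coset f Sf) as [h [k [Sh E]]].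
  destruct (fwd h Sh) as [Ah Bh]. destruct (Hpow k) as [Ak Bk].
  assert (Ef : f = gmul h (cpow k)) by (apply functional_extensionality; exact E).
  rewrite Ef, psi_hom in Pf by assumption.
  assert (k = 0) by lia. subst k.
  rewrite Ef. exact Sh.
Qed.
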